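(* Let $\mathbb{K}\in\{\mathbb{R},\mathbb{C}\}$. Let $S_1,\dots,S_M$ be non-trivial, independent linear subspaces of $\mathbb{K}^m$ with dimensions $d_1,\dots,d_M$, let $d_{\max}=\max_i d_i$ and $\mathcal{U}=\bigcup_{i=1}^M S_i$. Let $\mathbf{W}=[w_1\cdots w_n]\in\mathbb{K}^{m\times n}$ be a rank $r$ matrix whose columns are drawn from $\mathcal{U}$, such that the columns drawn from each $S_i$ form a generic set for $S_i$. Let $I\subset\{1,\dots,m\}$, $J\subset\{1,\dots,n\}$ with $|I|=s$, $|J|=k$, let $C\in\mathbb{K}^{m\times k}$ consist of the columns of $\mathbf{W}$ indexed by $J$, $R\in\mathbb{K}^{s\times n}$ of the rows of $\mathbf{W}$ indexed by $I$, and $U\in\mathbb{K}^{s\times k}$ the submatrix of $\mathbf{W}$ indexed by $I\times J$, and assume $\operatorname{rank}(U)=r$ (so that $\mathbf{W}=CU^\dagger R$). Let $Y=U^\dagger R$ and let $Q$ be either $\mathrm{bin}(Y^*Y)$ or $\mathrm{abs}(Y^*Y)$. Then $\Xi_{\mathbf{W}}=Q^{d_{\max}}$ is a similarity matrix for $\mathbf{W}$.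
   Context: Subspaces $S_1,\dots,S_M$ of $\mathbb{K}^m$ are independent if $\dim(S_1+\dots+S_M)=\dim S_1+\dots+\dim S_M\le m$. A set of data $\mathbf{W}$ drawn from a subspace $S$ of dimension $d$ is generic if it has more than $d$ elements and every $d$ vectors from it form a basis of $S$. For a matrix $A$, $\mathrm{abs}(A)(i,j)=|A(i,j)|$ and $\mathrm{bin}(A)(i,j)=1$ if $A(i,j)\neq 0$ and $0$ otherwise. A matrix $\Xi$ is a similarity matrix for $\mathbf{W}$ (whose columns lie in $\mathcal{U}$) if $\Xi$ is symmetric and $\Xi(i,j)\neq 0$ if and only if $w_i$ and $w_j$ come from the same subspace $S_l$. $U^\dagger$ is the Moore--Penrose pseudoinverse; $Q^{d_{\max}}$ is the ordinary matrix power. *)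

(* Defs.v *)
From HB Require Import structures.
From mathcomp Require Import all_boot all_order all_algebra.
Set Implicit Arguments. Unset Strict Implicit. Unset Printing Implicit Defensive.
Import Order.TTheory GRing.Theory Num.Theory.
Local Open Scope ring_scope.

Section Defs.
Variables (K : numFieldType) (conjf : K -> K).

(* conjugate transpose A^* (conjf = identity for K = R, complex conjugation for K = C) *)
Definition adjmx p q (A : 'M[K]_(p, q)) : 'M[K]_(q, p) := map_mx conjf A^T.

Definition is_MP_pinv p q (A : 'M[K]_(p, q)) (X : 'M[K]_(q, p)) : Prop :=
  [/\ A *m X *m A = A, X *m A *m X = X,
      adjmx (A *m X) = A *m X & adjmx (X *m A) = X *m A].

Definition abs_mx p q (A : 'M[K]_(p, q)) : 'M[K]_(p, q) := map_mx (fun x => `|x|) A.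
Definition bin_mx p q (A : 'M[K]_(p, q)) : 'M[K]_(p, q) :=
  map_mx (fun x => (x != 0)%:R) A.

Definition independent_subspaces m M (S : 'I_M -> {vspace 'cV[K]_m}) : Prop :=
  (\dim (\sum_(i < M) S i)%VS = \sum_(i < M) \dim (S i))%N.

Definition generic_columns m n (W : 'M[K]_(m, n)) (Sp : {vspace 'cV[K]_m}) : Prop :=
  let Jc := [set j : 'I_n | col j W \in Sp] in
  (\dim Sp < #|Jc|)%N /\
  forall A : {set 'I_n}, A \subset Jc -> #|A| = \dim Sp ->
    basis_of Sp [seq col j W | j in A].

Definition similarity_matrix m n M (S : 'I_M -> {vspace 'cV[K]_m})
    (W : 'M[K]_(m, n)) (Xi : 'M[K]_n) : Prop :=
  Xi^T = Xi /\
  forall i j : 'I_n,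
    Xi i j != 0 <-> exists l : 'I_M, col i W \in S l /\ col j W \in S l.

Definition theorem2_body : Prop :=
  forall (m n M : nat) (S : 'I_M -> {vspace 'cV[K]_m}) (W : 'M[K]_(m, n))
         (r s k : nat) (rI : 'I_s -> 'I_m) (cJ : 'I_k -> 'I_n),
    (forall i, S i != 0%VS) ->
    independent_subspaces S ->
    \rank W = r ->
    (forall j : 'I_n, exists i : 'I_M, col j W \in S i) ->
    (forall i, generic_columns W (S i)) ->
    injective rI -> injective cJ ->
    let C := colsub cJ W in
    let R := rowsub rI W in
    let U := mxsub rI cJ W in
    \rank U = r ->
    forall Udag : 'M[K]_(k, s), is_MP_pinv U Udag ->
    let Y := Udag *m R in
    let dmax := (\max_(i < M) \dim (S i))%N in
    forall Q : 'M[K]_n,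
      Q = bin_mx (adjmx Y *m Y) \/ Q = abs_mx (adjmx Y *m Y) ->
      similarity_matrix S W (Q ^+ dmax).

End Defs.

(* Main.v *)
Require Import Defs.
From HB Require Import structures.
From mathcomp Require Import all_boot all_order all_algebra.
From mathcomp Require Import zify.
Set Implicit Arguments. Unset Strict Implicit. Unset Printing Implicit Defensive.
Import Order.TTheory GRing.Theory Num.Theory.
Local Open Scope ring_scope.

Lemma ext_subset (T : finType) (A B : {set T}) (k : nat) :
  A \subset B -> (#|A| <= k <= #|B|)%N ->
  exists D : {set T}, [/\ A \subset D, D \subset B & #|D| = k].
Proof.
move=> AB /andP[hAk].
have [t ->] : exists t, k = (#|A| + t)%N by exists (k - #|A|)%N; rewrite subnKC.
elim: t A AB {hAk} => [|t IH] A AB hB.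
  by exists A; rewrite addn0.
have : ~~ (B \subset A).
  apply/negP => BA; have h := subset_leq_card BA; have := leq_trans hB h.
  by rewrite -[X in (_ <= X)%N](addn0 #|A|) leq_add2l.
case/subsetPn => x xB xA.
have h1' : x |: A \subset B by rewrite subUset sub1set xB AB.
have h2' : (#|x |: A| + t <= #|B|)%N by rewrite cardsU1 xA /= add1n addSn -addnS.
have [D [h1 h2 h3]] := IH _ h1' h2'.
exists D; split => //; first by apply: subset_trans h1; apply: subsetUr.
by rewrite h3 cardsU1 xA /= add1n addSn -addnS.
Qed.

Definition sp (F : fieldType) m n (w : 'I_n -> 'cV[F]_m) (X : {set 'I_n}) :=
  (\sum_(j in X) <[w j]>)%VS.

Lemma mem_sp (F : fieldType) m n (w : 'I_n -> 'cV[F]_m) (X : {set 'I_n}) j :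
  j \in X -> w j \in sp w X.
Proof. by move=> jX; rewrite memvE; apply: (sumv_sup j) => //; rewrite -memvE memv_line. Qed.

Lemma sp_basis (F : fieldType) m n (w : 'I_n -> 'cV[F]_m) V (D : {set 'I_n}) :
  basis_of V [seq w j | j in D] -> sp w D = V.
Proof.
case/andP=> /eqP <- _; rewrite span_def big_map /sp.
by rewrite big_enum.
Qed.

Lemma sp_sub (F : fieldType) m n (w : 'I_n -> 'cV[F]_m) (X Y : {set 'I_n}) :
  X \subset Y -> (sp w X <= sp w Y)%VS.
Proof.
move=> XY; apply/subv_sumP => j jX; rewrite -memvE; apply: mem_sp.
exact: (subsetP XY).
Qed.

Fixpoint reach n (adj : rel 'I_n) (i : 'I_n) (t : nat) : {set 'I_n} :=
  if t is t'.+1 then reach adj i t' :|: [set x | [exists u in reach adj i t', adj u x]]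
  else [set i].

Lemma dim_sp (F : fieldType) m n (w : 'I_n -> 'cV[F]_m) (X : {set 'I_n}) :
  (\dim (sp w X) <= #|X|)%N.
Proof.
apply: leq_trans (dimv_leq_sum _ _ _) _.
rewrite -sum1_card; apply: leq_sum => j _; rewrite dim_vline; by case: (_ != 0).
Qed.

Lemma GC (F : fieldType) m n (w : 'I_n -> 'cV[F]_m) (V : {vspace 'cV[F]_m})
   (D : {set 'I_n}) a0 :
  V != 0%VS -> #|D| = \dim V -> basis_of V [seq w j | j in D] -> a0 \in D ->
  w a0 \in sp w (D :\ a0) -> False.
Proof.
move=> V0 cD bD aD wa.
have e : sp w D = V by apply: sp_basis.
have sub : (V <= sp w (D :\ a0))%VS.
  rewrite -e /sp (bigD1 a0) //= subv_add -memvE wa /=.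
  apply/subv_sumP => j /andP[jD ja]; rewrite -memvE; apply: mem_sp.
  by rewrite in_setD1 ja.
have := leq_trans (dimvS sub) (dim_sp w (D :\ a0)).
rewrite -cD (cardsD1 a0 D) aD add1n ltnn //.
Qed.

Lemma sum_if_eq (V : nmodType) (I : finType) (a : I) (x : V) :
  \sum_(i : I) (if a == i then x else 0) = x.
Proof.
rewrite (bigD1 a) //= eqxx big1 ?addr0 // => i ia.
by rewrite eq_sym (negbTE ia).
Qed.

Lemma mul_col_sum (R : comPzSemiRingType) m k (A : 'M[R]_(m, k)) (z : 'cV_k) :
  A *m z = \sum_q z q 0 *: col q A.
Proof.
apply/matrixP => i j; rewrite !mxE summxE; apply: eq_bigr => q _.
by rewrite !mxE (ord1 j) mulrC.
Qed.

Lemma col_colsub (R : Type) m n k (g : 'I_k -> 'I_n) (W : 'M[R]_(m, n)) q :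
  col q (colsub g W) = col (g q) W.
Proof. by apply/matrixP => i j; rewrite !mxE. Qed.

Lemma colM (R : pzSemiRingType) m n p (A : 'M[R]_(m, n)) (B : 'M[R]_(n, p)) j :
  col j (A *m B) = A *m col j B.
Proof. by rewrite !colE mulmxA. Qed.

Lemma trmxX (R : comPzSemiRingType) n (A : 'M[R]_n) t : (A ^+ t)^T = (A^T) ^+ t.
Proof.
elim: t => [|t IH]; first by rewrite !expr0 trmx1.
by rewrite exprS exprSr -!mulmxE trmx_mul IH.
Qed.
Lemma mxsub_PQ (R : pzSemiRingType) m n s k (rI : 'I_s -> 'I_m) (cJ : 'I_k -> 'I_n)
  (W : 'M[R]_(m, n)) : mxsub rI cJ W = rowsub rI W *m colsub cJ 1%:M.
Proof.
by rewrite mulmx_colsub mulmx1; apply/matrixP => i j; rewrite !mxE.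
Qed.

Lemma CUR (F : fieldType) m n s k (rI : 'I_s -> 'I_m) (cJ : 'I_k -> 'I_n)
  (W : 'M[F]_(m, n)) (Ud : 'M[F]_(k, s)) :
  \rank (mxsub rI cJ W) = \rank W ->
  mxsub rI cJ W *m Ud *m mxsub rI cJ W = mxsub rI cJ W ->
  colsub cJ W *m (Ud *m rowsub rI W) = W.
Proof.
set U := mxsub rI cJ W => rU pinv.
set P : 'M[F]_(s, m) := rowsub rI 1%:M.
set Qm : 'M[F]_(n, k) := colsub cJ 1%:M.
have eR : rowsub rI W = P *m W by rewrite rowsubE.
have eC : colsub cJ W = W *m Qm by rewrite mulmx_colsub mulmx1.
have eU : U = P *m W *m Qm by rewrite /U mxsub_PQ eR.
have rR : \rank (P *m W) = \rank W.
  apply/eqP; rewrite eqn_leq mxrankM_maxr /= -{1}rU eU mxrankM_maxl //.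
(* column space of R equals that of U *)
have sUR : ((P *m W *m Qm)^T <= (P *m W)^T)%MS by rewrite trmx_mul submxMl.
have := (mxrank_leqif_sup sUR).2.
rewrite !mxrank_tr -eU rU rR eqxx => /esym /submxP [D eD].
have eRU : P *m W = U *m D^T.
  by rewrite -[P *m W]trmxK eD trmx_mul trmxK eU.
have UUR : U *m Ud *m (P *m W) = P *m W by rewrite eRU !mulmxA pinv.
set E := colsub cJ W *m (Ud *m rowsub rI W) - W.
have PE : P *m E = 0.
  by rewrite /E mulmxBr eC eR !mulmxA -eU -(mulmxA (U *m Ud) P W) UUR subrr.
have EW : E = W *m (Qm *m Ud *m (P *m W) - 1%:M).
  by rewrite /E mulmxBr mulmx1 eC eR !mulmxA.
have sE : (E^T <= W^T :&: kermx P^T)%MS.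
  rewrite sub_capmx; apply/andP; split.
    by rewrite EW trmx_mul submxMl.
  by apply/sub_kermxP; rewrite -trmx_mul PE trmx0.
have := mxrank_mul_ker W^T P^T.
rewrite -trmx_mul !mxrank_tr rR => /eqP.
rewrite -{2}[\rank W]addn0 eqn_add2l mxrank_eq0 => /eqP c0.
move: sE; rewrite c0 submx0 -trmx0 => /eqP /trmx_inj.
by move/eqP; rewrite subr_eq0 => /eqP.
Qed.

Section Conj.
Variable K : numFieldType.
Variable conjf : K -> K.
Hypothesis cD : forall x y, conjf (x + y) = conjf x + conjf y.
Hypothesis cM : forall x y, conjf (x * y) = conjf x * conjf y.
Hypothesis cK : forall x, conjf (conjf x) = x.
Hypothesis cge0 : forall x, 0 <= conjf x * x.
Hypothesis ceq0 : forall x, conjf x * x = 0 -> x = 0.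

Lemma c0 : conjf 0 = 0.
Proof. by apply: (@addrI _ (conjf 0)); rewrite -cD !addr0. Qed.

Lemma c_sum (I : Type) (r : seq I) (P : pred I) (F : I -> K) :
  conjf (\sum_(i <- r | P i) F i) = \sum_(i <- r | P i) conjf (F i).
Proof. exact: (big_morph conjf cD c0). Qed.

Definition dot k (u v : 'cV[K]_k) := \sum_q conjf (u q 0) * v q 0.

Lemma dot_adj p k (A : 'M[K]_(p, k)) (z : 'cV[K]_p) (y : 'cV[K]_k) :
  dot z (A *m y) = dot (adjmx conjf A *m z) y.
Proof.
rewrite /dot; under eq_bigr do rewrite mxE mulr_sumr.
rewrite exchange_big; apply: eq_bigr => q _.
rewrite mxE c_sum mulr_suml; apply: eq_bigr => i _.
by rewrite !mxE cM cK mulrA [conjf _ * _]mulrC.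
Qed.

Lemma dot_eq0 k (y : 'cV[K]_k) : dot y y = 0 -> y = 0.
Proof.
move=> h; apply/matrixP => q j; rewrite (ord1 j) mxE.
apply: ceq0; exact: (psumr_eq0P (fun i _ => cge0 (y i 0)) h).
Qed.

Lemma dotBr k (u v1 v2 : 'cV[K]_k) : dot u (v1 - v2) = dot u v1 - dot u v2.
Proof.
rewrite /dot -sumrB; apply: eq_bigr => q _; by rewrite !mxE mulrBr.
Qed.

Lemma dot_sumr k (I : finType) (X : {set I}) (a : I -> K) (v : I -> 'cV[K]_k) u :
  dot u (\sum_(j in X) a j *: v j) = \sum_(j in X) a j * dot u (v j).
Proof.
rewrite /dot; under eq_bigr do rewrite summxE mulr_sumr.
rewrite exchange_big; apply: eq_bigr => j _; rewrite mulr_sumr.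
by apply: eq_bigr => q _; rewrite !mxE mulrCA.
Qed.

Lemma dot_suml k (I : finType) (X : {set I}) (a : I -> K) (v : I -> 'cV[K]_k) z :
  dot (\sum_(j in X) a j *: v j) z = \sum_(j in X) conjf (a j) * dot (v j) z.
Proof.
rewrite /dot; under eq_bigr do rewrite summxE c_sum mulr_suml.
rewrite exchange_big; apply: eq_bigr => j _; rewrite mulr_sumr.
by apply: eq_bigr => q _; rewrite !mxE cM mulrA.
Qed.

Lemma Key_span m n k (w : 'I_n -> 'cV[K]_m) (y : 'I_n -> 'cV[K]_k)
  (C : 'M[K]_(m, k)) (L : 'M[K]_(k, m))
  (hC : forall j, C *m y j = w j) (hL : forall j, y j = L *m w j)
  (V : {vspace 'cV[K]_m}) (D A1 : {set 'I_n}) v :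
  basis_of V [seq w j | j in D] -> w v \in V -> A1 \subset D ->
  (forall u, u \in A1 -> dot (y u) (y v) = 0) ->
  (forall u x, u \in A1 -> x \in D :\: A1 -> dot (y u) (y x) = 0) ->
  w v \in sp w (D :\: A1).
Proof.
move=> bD wvV A1D hv hx.
have e := sp_basis bD; rewrite -e in wvV.
case/memv_sumP: wvV => vs hvs ev.
have : forall j, exists a : K, j \in D -> vs j = a *: w j.
  move=> j; case: (boolP (j \in D)) => jD; last by exists 0.
  by have /vlineP [a ->] := hvs j jD; exists a.
case/fin_all_exists => al hal.
have ev' : w v = \sum_(j in D) al j *: w j.
  by rewrite ev; apply: eq_bigr => j jD; rewrite hal.
have ey : y v = \sum_(j in D) al j *: y j.
  by rewrite hL ev' mulmx_sumr; apply: eq_bigr => j _; rewrite -scalemxAr -hL.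
rewrite (big_setID A1) /= (setIidPr A1D) in ey.
set a := \sum_(j in A1) al j *: y j in ey.
set b := \sum_(j in D :\: A1) al j *: y j in ey.
have da : forall z, (forall u, u \in A1 -> dot (y u) z = 0) -> dot a z = 0.
  by move=> z hz; rewrite dot_suml big1 // => u uA; rewrite hz // mulr0.
have a0 : a = 0.
  apply: dot_eq0; have e2 : a = y v - b by rewrite ey addrK.
  rewrite {2}e2.
  rewrite dotBr (da _ hv) (da b) ?subr0 // => u uA.
  by rewrite dot_sumr big1 // => x xD; rewrite hx // mulr0.
have -> : w v = \sum_(j in D :\: A1) al j *: w j.
  rewrite -hC ey a0 add0r mulmx_sumr; apply: eq_bigr => j _.
  by rewrite -scalemxAr hC.
by apply: memv_suml => j jX; apply/memvZ/mem_sp.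
Qed.



Hypothesis cnorm : forall x, `|conjf x| = `|x|.

Lemma cnz x : (conjf x == 0) = (x == 0).
Proof. by apply/eqP/eqP => [h|->]; [rewrite -(cK x) h c0 | exact: c0]. Qed.

Lemma main_gen : theorem2_body conjf.
Proof.
move=> m n M S W r s k rI cJ Snz indep rW hlab gen rIi cJi C R U rU Ud
  [p1 p2 p3 p4] Y dmax Q HQ.
have CY : C *m Y = W.
  by rewrite /C /Y /R; apply: CUR => //; rewrite -/U rU rW.
have XY : Ud *m U *m Y = Y by rewrite /Y mulmxA p2.
pose y j := col j Y.
have hC : forall j, C *m y j = col j W by move=> j; rewrite /y -colM CY.
pose L := Ud *m rowsub rI 1%:M.
have hL : forall j, y j = L *m col j W.
  by move=> j; rewrite /y /Y /R rowsubE -colM !mulmxA.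
have hX : forall j, Ud *m U *m y j = y j by move=> j; rewrite /y -colM XY.
have eU : U = rowsub rI C by apply/matrixP => i j; rewrite !mxE.
have dir : directv (\sum_(i < M) S i) by rewrite directvE /= indep.
have uniq0 : forall a b v, v \in S a -> v \in S b -> a != b -> v = 0.
  move=> a b v va vb ab.
  have H := directv_sum_independent dir.
  pose us i := (if a == i then v else 0) - (if b == i then v else 0).
  have hm : forall i, true -> us i \in S i.
    move=> i _; rewrite /us; case: eqP => [<-|_]; case: eqP => [<-|_];
    by rewrite ?subrr ?sub0r ?subr0 ?mem0v ?memvN.
  have hs : \sum_i us i = 0 by rewrite /us sumrB !sum_if_eq subrr.
  by have := H us hm hs a isT; rewrite /us eqxx eq_sym (negbTE ab) subr0.
pose lab j := xchoose (hlab j).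
have labP : forall j, col j W \in S (lab j) by move=> j; exact: (xchooseP (hlab j)).
have w0 : forall j, col j W != 0.
  move=> j; apply/eqP => wj.
  have [gl1 gl2] := gen (lab j).
  have hd : (0 < \dim (S (lab j)))%N by rewrite lt0n dimv_eq0 Snz.
  have e1 : [set j] \subset [set x | col x W \in S (lab j)] by rewrite sub1set inE labP.
  have e2 : (#|[set j]| <= \dim (S (lab j)) <= #|[set x | col x W \in S (lab j)]|)%N.
    by rewrite cards1 hd ltnW.
  have [D [h1 h2 h3]] := ext_subset e1 e2.
  apply: (GC (w := fun x => col x W) (V := S (lab j)) (D := D) (a0 := j)) => //.
  - exact: gl2.
  - by rewrite -sub1set.
  - by rewrite wj mem0v.
have lab_u : forall j a, col j W \in S a -> a = lab j.
  move=> j a ja; apply/eqP; apply/negPn/negP => ne.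
  by apply/(negP (w0 j)); apply/eqP; exact: uniq0 ja (labP j) ne.
set G := adjmx conjf Y *m Y in HQ *.
have GE : forall i j, G i j = dot (y i) (y j).
  by move=> i j; rewrite /G /dot mxE; apply: eq_bigr => q _; rewrite !mxE.
clearbody G.
have supp : forall i q, lab (cJ q) != lab i -> y i q 0 = 0.
  move=> i q hq.
  pose yb b := \col_q' (if lab (cJ q') == b then y i q' 0 else 0).
  have ybS : forall b, C *m yb b \in S b.
    move=> b; rewrite mul_col_sum; apply: memv_suml => q' _.
    rewrite col_colsub mxE; case: eqP => [<-|_]; last by rewrite scale0r mem0v.
    by apply: memvZ; exact: labP.
  have ysum : \sum_b yb b = y i.
    apply/matrixP => q' j'; rewrite summxE (ord1 j').
    under eq_bigr do rewrite mxE.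
    exact: sum_if_eq.
  pose us b := C *m yb b - (if lab i == b then col i W else 0).
  have hm : forall b, true -> us b \in S b.
    move=> b _; rewrite /us memvB ?ybS //; case: eqP => [<-|_]; [exact: labP | exact: mem0v].
  have hs : \sum_b us b = 0.
    by rewrite /us sumrB sum_if_eq -mulmx_sumr ysum hC subrr.
  have := directv_sum_independent dir us hm hs (lab (cJ q)) isT.
  rewrite /us eq_sym (negbTE hq) subr0 => Cz.
  have Uz : U *m yb (lab (cJ q)) = 0 by rewrite eU rowsubE -mulmxA Cz mulmx0.
  have dz : dot (yb (lab (cJ q))) (y i) = 0.
    have := dot_adj (Ud *m U) (yb (lab (cJ q))) (y i).
    rewrite hX p4 -mulmxA Uz mulmx0 => ->.
    by rewrite /dot big1 // => q' _; rewrite mxE c0 mul0r.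
  have ge : forall q', true -> 0 <= conjf (yb (lab (cJ q)) q' 0) * y i q' 0.
    by move=> q' _; rewrite mxE; case: ifP => _; rewrite ?cge0 // c0 mul0r.
  have := psumr_eq0P ge dz (i := q) isT.
  by rewrite [yb _ _ _]mxE eqxx => /ceq0.
have Gx : forall i j, lab i != lab j -> G i j = 0.
  move=> i j h; rewrite GE /dot big1 // => q _.
  case: (eqVneq (lab (cJ q)) (lab i)) => e.
    have : lab (cJ q) != lab j by rewrite e.
    by move/supp => ->; rewrite mulr0.
  by rewrite (supp _ _ e) c0 mul0r.
have Gd : forall i, G i i != 0.
  move=> i; apply/eqP => h; rewrite GE in h.
  have := dot_eq0 h => y0; apply/(negP (w0 i)); apply/eqP.
  by rewrite -hC y0 mulmx0.
have Gsym : forall i j, G j i = conjf (G i j).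
  move=> i j; rewrite !GE /dot c_sum; apply: eq_bigr => q _.
  by rewrite cM cK mulrC.
have [Q0 Qge0 Qsym] : [/\ forall i j, (Q i j == 0) = (G i j == 0),
    forall i j, 0 <= Q i j & Q^T = Q].
  case: HQ => ->; rewrite /bin_mx /abs_mx; split.
  - by move=> i j; rewrite !mxE; case: (eqVneq (G i j) 0) => _ /=; rewrite ?eqxx ?oner_eq0.
  - by move=> i j; rewrite !mxE ler0n.
  - by apply/matrixP => i j; rewrite !mxE Gsym cnz.
  - by move=> i j; rewrite !mxE normr_eq0.
  - by move=> i j; rewrite !mxE normr_ge0.
  - by apply/matrixP => i j; rewrite !mxE Gsym cnorm.
have Qt_sym : forall t, (Q ^+ t)^T = Q ^+ t by move=> t; rewrite trmxX Qsym.
have Qt_ge0 : forall t i j, 0 <= (Q ^+ t) i j.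
  elim=> [|t IH] i j; first by rewrite expr0 mxE ler0n.
  rewrite exprSr -mulmxE mxE; apply: sumr_ge0 => u _; exact: mulr_ge0.
have Qt_cross : forall t i j, lab i != lab j -> (Q ^+ t) i j = 0.
  elim=> [|t IH] i j h.
    rewrite expr0 mxE; case: eqP => // e; by rewrite e eqxx in h.
  rewrite exprSr -mulmxE mxE big1 // => u _.
  case: (eqVneq (lab i) (lab u)) => e; last by rewrite IH // mul0r.
  have : lab u != lab j by rewrite -e.
  by move/Gx/eqP; rewrite -Q0 => /eqP ->; rewrite mulr0.
pose adj := [rel u x | G u x != 0].
have Nmono : forall i t t', (t <= t')%N -> reach adj i t \subset reach adj i t'.
  move=> i t; elim=> [|t' IH]; first by rewrite leqn0 => /eqP ->.
  rewrite leq_eqVlt => /orP [/eqP -> // | ]; rewrite ltnS => /IH h.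
  by apply: subset_trans h _; rewrite /= subsetUl.
have Qpos : forall i t x, x \in reach adj i t -> 0 < (Q ^+ t) i x.
  move=> i; elim=> [|t IH] x.
    by rewrite /= inE => /eqP ->; rewrite expr0 mxE eqxx ltr01.
  move=> xN1; have [u0 [uN ux]] : exists u0, u0 \in reach adj i t /\ G u0 x != 0.
    move: xN1; rewrite /= inE => /orP [xN | ].
      by exists x; split => //; exact: Gd.
    by rewrite inE => /existsP [u /andP [uN ux]]; exists u.
  rewrite exprSr -mulmxE mxE (bigD1 u0) //=.
  apply: (@lt_le_trans _ _ ((Q ^+ t) i u0 * Q u0 x)).
    apply: mulr_gt0; first exact: IH.
    by rewrite lt0r Q0 ux Qge0.
  by rewrite lerDl; apply: sumr_ge0 => v _; exact: mulr_ge0.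
have conn : forall i j, lab j = lab i -> j \in reach adj i (\dim (S (lab i))).
  move=> i j hj.
  set l := lab i; set d := \dim (S l); set cl := [set x | col x W \in S l].
  set N := reach adj i.
  have [gl1 gl2] := gen l.
  have clE : forall x, (x \in cl) = (lab x == l).
    move=> x; rewrite inE; apply/idP/eqP => [h | <-]; last exact: labP.
    by rewrite (lab_u x l h).
  have Ncl : forall t, N t \subset cl.
    elim=> [|t IH]; first by rewrite /N /= sub1set clE.
    rewrite /N /= subUset IH /=; apply/subsetP => x; rewrite inE.
    case/existsP => u /andP [uN ux].
    have uc := subsetP IH u uN; rewrite clE in uc; rewrite clE -(eqP uc).
    by apply/eqP; apply/eqP; apply/negPn/negP => ne; rewrite Gx ?eqxx // eq_sym in ux.
  have d1 : (0 < d)%N by rewrite lt0n dimv_eq0 Snz.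
  have Kcontra : forall (D A1 : {set 'I_n}) a0 v, D \subset cl -> #|D| = d ->
      v \in cl -> v \notin D -> A1 \subset D -> a0 \in A1 ->
      (forall u, u \in A1 -> G u v = 0) ->
      (forall u x, u \in A1 -> x \in D :\: A1 -> G u x = 0) -> False.
    move=> D A1 a0 v hD hc vcl vD A1D a0A hv hx.
    have bD := gl2 D hD hc.
    have vS : col v W \in S l by rewrite inE in vcl.
    have sp1 := Key_span hC hL bD vS A1D
      (fun u uA => etrans (esym (GE u v)) (hv u uA))
      (fun u x uA xD => etrans (esym (GE u x)) (hx u x uA xD)).
    have a0D : a0 \in D := subsetP A1D a0 a0A.
    have hcard : #|v |: (D :\ a0)| = d.
      rewrite cardsU1 in_setD1 (negbTE vD) andbF /=.
      by move: hc; rewrite (cardsD1 a0 D) a0D add1n => <-.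
    apply: (GC (w := fun x => col x W) (V := S l) (D := v |: (D :\ a0)) (a0 := v)).
    - exact: Snz.
    - exact: hcard.
    - apply: gl2 => //; rewrite subUset sub1set vcl /=.
      by apply: subset_trans hD; apply: subD1set.
    - exact: setU11.
    - apply: (subvP (sp_sub _ _) _ sp1); apply/subsetP => x.
      rewrite !inE => /andP [xA xD]; apply/andP; split.
        by apply/eqP => xv; rewrite -xv xD in vD.
      apply/orP; right; rewrite xD andbT; apply/eqP => xa.
      by rewrite xa a0A in xA.
  have orth0 : forall t u x, u \in N t -> x \notin N t.+1 -> G u x = 0.
    move=> t u x uN xN; apply/eqP; apply/negPn/negP => nz.
    apply: (negP xN); rewrite /N /= inE; apply/orP; right; rewrite inE.
    by apply/existsP; exists u; rewrite uN.
  have iN : forall t, i \in N t.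
    by move=> t; apply: (subsetP (Nmono i 0 t (leq0n t))); rewrite /= inE.
  have G1 : forall t, cl \subset N t \/ (t < #|N t|)%N.
    elim=> [|t IH]; first by right; rewrite /N /= cards1.
    case: (boolP (cl \subset N t.+1)) => [h|ncl]; first by left.
    right.
    have NN : N t \subset N t.+1 by rewrite /N /= subsetUl.
    case: IH => [h | lt].
      by exfalso; move/negP: ncl; apply; apply: subset_trans h NN.
    case: (boolP (N t.+1 \subset N t)) => [clo|nclo]; last first.
      have pr : N t \proper N t.+1 by rewrite properE NN nclo.
      exact: leq_ltn_trans lt (proper_card pr).
    exfalso; case/subsetPn: ncl => v vcl vN.
    have vN' : v \notin N t by apply/negP => h; rewrite (subsetP NN v h) in vN.
    have orth : forall u x, u \in N t -> x \in cl -> x \notin N t -> G u x = 0.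
      move=> u x uN xcl xN; apply: (orth0 t) => //.
      by apply/negP => h; rewrite (subsetP clo x h) in xN.
    case: (leqP d #|N t|) => hd.
      have e2 : (#|(set0 : {set 'I_n})| <= d <= #|N t|)%N by rewrite cards0 hd.
      have [D [_ h2 h3]] := ext_subset (sub0set _) e2.
      have : (0 < #|D|)%N by rewrite h3.
      rewrite card_gt0 => /set0Pn [a0 a0D].
      apply: (Kcontra D D a0 v) => //.
      - exact: subset_trans h2 (Ncl t).
      - by apply/negP => h; rewrite (subsetP h2 v h) in vN'.
      - by move=> u uD; apply: orth => //; exact: subsetP h2 u uD.
      - by move=> u x _; rewrite setDv inE.
    have e1 : N t \subset cl :\ v.
      apply/subsetP => x xN; rewrite in_setD1 (subsetP (Ncl t)) // andbT.
      by apply/eqP => xv; rewrite -xv xN in vN'.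
    have e2 : (#|N t| <= d <= #|cl :\ v|)%N.
      rewrite (ltnW hd) /=.
      by move: gl1; rewrite -/cl (cardsD1 v cl) vcl add1n ltnS.
    have [D [h1 h2 h3]] := ext_subset e1 e2.
    apply: (Kcontra D (N t) i v) => //.
    - by apply: subset_trans h2 _; apply: subD1set.
    - by apply/negP => h; have := subsetP h2 v h; rewrite in_setD1 eqxx.
    - by move=> u uN; apply: orth.
    - move=> u x uN; rewrite inE => /andP [xN xD]; apply: orth => //.
      by have := subsetP h2 x xD; rewrite in_setD1 => /andP [].
  have G2 : forall t, (d <= t)%N -> N t.+1 \subset N t.
    move=> t hdt; apply/subsetP => x xN1.
    case: (boolP (x \in N t)) => // xN; exfalso.
    case: t hdt xN1 xN => [|t'] hdt xN1 xN; first by rewrite leqn0 in hdt; rewrite (eqP hdt) in d1.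
    have xcl := subsetP (Ncl _) x xN1.
    have NN : N t' \subset N t'.+1 by rewrite /N /= subsetUl.
    have xN' : x \notin N t' by apply/negP => h; rewrite (subsetP NN x h) in xN.
    case: (G1 t') => [h | lt].
      by rewrite (subsetP NN x (subsetP h x xcl)) in xN.
    have e2 : (#|(set0 : {set 'I_n})| <= d <= #|N t'|)%N.
      by rewrite cards0 /=; exact: leq_trans hdt lt.
    have [D [_ h2 h3]] := ext_subset (sub0set _) e2.
    have : (0 < #|D|)%N by rewrite h3.
    rewrite card_gt0 => /set0Pn [a0 a0D].
    apply: (Kcontra D D a0 x) => //.
    - exact: subset_trans h2 (Ncl t').
    - by apply/negP => h; rewrite (subsetP h2 x h) in xN'.
    - by move=> u uD; apply: (orth0 t') => //; exact: subsetP h2 u uD.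
    - by move=> u x' _; rewrite setDv inE.
  have Nd : forall t, N (d + t)%N \subset N d.
    elim=> [|t IH]; first by rewrite addn0.
    apply: subset_trans IH; rewrite addnS; apply: G2; exact: leq_addr.
  have dn : (d <= n)%N.
    apply: leq_trans (ltnW gl1) _; rewrite -[X in (_ <= X)%N]card_ord; exact: max_card.
  have jcl : j \in cl by rewrite clE hj.
  case: (G1 n) => [h | lt].
    by have := Nd (n - d)%N; rewrite subnKC // => h'; apply: (subsetP h'); apply: (subsetP h).
  by have := max_card (mem (N n)); rewrite card_ord leqNgt lt.
split => [|i j]; first exact: Qt_sym.
split.
- move=> nz; exists (lab i); split; first exact: labP.
  have e : lab i = lab j.
    by apply/eqP; apply/negPn/negP => ne; rewrite Qt_cross ?eqxx in nz.
  by rewrite e; exact: labP.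
- case=> l [il jl].
  have e1 := lab_u _ _ il; have e2 := lab_u _ _ jl.
  have := conn i j (etrans (esym e2) e1).
  have dle : (\dim (S (lab i)) <= dmax)%N.
    by rewrite /dmax; exact: (leq_bigmax (F := fun i => \dim (S i)) (lab i)).
  move/(subsetP (Nmono i _ _ dle)) => h.
  exact: lt0r_neq0 (Qpos i dmax j h).
Qed.

End Conj.

Theorem theorem2 :
  (forall R : rcfType, theorem2_body (K := R) id) /\
  (forall C : numClosedFieldType, theorem2_body (K := C) Num.conj).
Proof.
split.
- move=> R; apply: (@main_gen R id) => //.
  + by move=> x; rewrite -expr2 sqr_ge0.
  + by move=> x /eqP; rewrite mulf_eq0 orbb => /eqP.
- move=> C; apply: (@main_gen C Num.conj).
  + by move=> x y; rewrite rmorphD.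
  + by move=> x y; rewrite rmorphM.
  + exact: conjCK.
  + by move=> x; rewrite mulrC mul_conjC_ge0.
  + by move=> x /eqP; rewrite mulrC mul_conjC_eq0 => /eqP.
  + exact: norm_conjC.
Qed.
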